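(* Let $r\ge 2$, let $H$ be a digraph (possibly with loops), let $D$ be an $H$-colored $r$-partite tournament, let $k \geq 5$, and let $(u,v)$ be an arc of $C_{H}^{k-1}(D)$. If $(u,v)$ is an asymmetric arc of $C_{H}^{k-1}(D)$ (i.e., $(v,u)\notin A(C_{H}^{k-1}(D))$), then $d_{D}(u,v) \leq 2$.
   Context: All digraphs are finite. An $r$-partite tournament is a digraph whose vertex set is partitioned into $r$ disjoint independent sets such that every two vertices in different classes are joined by exactly one arc (an asymmetric arc). $d_D(u,v)$ is the length of a shortest directed $uv$-path in $D$. $D$ has no loops and comes with a map $\rho: A(D)\to V(H)$. For a walk $W=(x_0,\ldots,x_n)$ in $D$, there is an obstruction on $x_i$ if $(\rho(x_{i-1},x_i),\rho(x_i,x_{i+1})) \notin A(H)$; for an open walk this is considered at internal vertices $x_i$, $1\le i\le n-1$, for a closed walk at all $i\in\{0,\ldots,n-1\}$ with indices modulo $n$. $O_H(W)$ is the set of indices with an obstruction; the $H$-length is $l_H(W)=|O_H(W)|+1$ for open $W$ and $|O_H(W)|$ for closed $W$. The $(k-1,H)$-closure $C_H^{k-1}(D)$ is the digraph on $V(D)$ in which $(x,y)$ is an arc iff there is a directed $xy$-path in $D$ of $H$-length at most $k-1$. *)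

(* Defs.v *)
From mathcomp Require Import all_boot.
Set Implicit Arguments. Unset Strict Implicit. Unset Printing Implicit Defensive.

(* An H-coloring of D is a map rho : V -> V -> W (only its values on arcs matter),
   where H is a digraph on W with arc relation h (loops allowed). *)

Definition multipartite_tournament (V : finType) (r : nat)
  (a : rel V) (part : V -> 'I_r) : Prop :=
  (forall i : 'I_r, exists x, part x = i) /\
  (forall x y, part x = part y -> ~~ a x y) /\
  (forall x y, part x != part y -> (a x y || a y x) && ~~ (a x y && a y x)).

(* A directed path x0 = u, x1, ..., xn (with p = [:: x1; ...; xn]) in D:
   consecutive vertices joined by arcs, all vertices distinct. *)
Definition dpath (V : finType) (a : rel V) (u : V) (p : seq V) : bool :=
  path a u p && uniq (u :: p).

Definition arc_colors (V W : Type) (rho : V -> V -> W) (u : V) (p : seq V) : seq W :=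
  pairmap rho u p.

Definition n_obstructions (V W : Type) (h : rel W) (rho : V -> V -> W)
  (u : V) (p : seq V) : nat :=
  let cs := arc_colors rho u p in
  count (fun c : W * W => ~~ h c.1 c.2) (zip cs (behead cs)).

Definition H_length (V W : Type) (h : rel W) (rho : V -> V -> W)
  (u : V) (p : seq V) : nat :=
  (n_obstructions h rho u p).+1.

(* (x,y) is an arc of the (m,H)-closure C_H^m(D): there is a directed xy-path
   in D of H-length at most m (x <> y, the closure has no loops). *)
Definition closure_arc (V W : finType) (a : rel V) (h : rel W)
  (rho : V -> V -> W) (m : nat) (x y : V) : Prop :=
  x != y /\ exists p : seq V, [/\ dpath a x p, last x p = y & H_length h rho x p <= m].

Definition dist_le (V : finType) (a : rel V) (u v : V) (n : nat) : Prop :=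
  exists p : seq V, [/\ dpath a u p, last u p = v & size p <= n].

(* Main.v *)
Require Import Defs.
From mathcomp Require Import all_boot.

Set Implicit Arguments.
Lemma nobs_le (V W : Type) (h : rel W) (rho : V -> V -> W) (x : V) (p : seq V) :
  n_obstructions h rho x p <= (size p).-1.
Proof.
rewrite /n_obstructions; apply: leq_trans (count_size _ _) _.
by rewrite size_zip size_behead /arc_colors size_pairmap; case: (size p) => //= n; rewrite minnE subSnn subn1.
Qed.

Section S.
Variables (r : nat) (V W : finType) (a : rel V) (h : rel W)
  (rho : V -> V -> W) (part : V -> 'I_r) (u v : V).
Hypothesis (HT : multipartite_tournament a part).
Hypothesis (huv : part u = part v) (nuv : u != v).
Hypothesis Hnc : forall p, dpath a v p -> last v p = u -> size p <= 4 -> False.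

Lemma same_na x y : part x = part y -> a x y = false.
Proof. by case: HT => _ [H _] /H /negbTE. Qed.
Lemma arc_part x y : a x y -> part x != part y.
Proof. by move=> Hxy; apply/eqP => /same_na; rewrite Hxy. Qed.
Lemma tot x y : part x != part y -> a x y = ~~ a y x.
Proof.
case: HT => _ [_ H] /H /andP [H1 H2].
by move: H1 H2; case: (a x y); case: (a y x).
Qed.
Lemma asym x y : a x y -> a y x = false.
Proof. move=> Hxy; move: (@tot x y (arc_part Hxy)); rewrite Hxy; by case: (a y x). Qed.
Lemma other x y : part x != part y -> a x y = false -> a y x.
Proof. by move=> P E; move: (@tot x y P); rewrite E; case: (a y x). Qed.
Lemma neq_of x y : a x y -> x != y.
Proof. by move=> /arc_part; apply: contra => /eqP ->. Qed.

Ltac finish := rewrite /dpath /= ?inE ?negb_or;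
  repeat (apply/andP; split); try done; try by rewrite eq_sym.

Lemma inv n : forall q y, size q <= n -> a v y -> path a y q -> last y q = v ->
  dist_le a u v 2.
Proof.
elim: n => [|n IH] [|z q] y //=.
- by move=> _ Hvy _ Eyv; rewrite Eyv same_na in Hvy.
- by move=> _ Hvy _ Eyv; rewrite Eyv same_na in Hvy.
move=> Hs Hvy /andP [Hyz Hq] Hl.
have pvy := arc_part Hvy. have nvy := neq_of Hvy.
have nyu : y != u by apply/eqP => E; rewrite E same_na in Hvy.
case: (boolP (part z == part v)) => pz.
- case: (boolP (z == u)) => [/eqP Ezu|nzu].
    have Hyu : a y u by rewrite -Ezu.
    by exfalso; apply: (Hnc [:: y; u]) => //; finish.
  case: q Hq Hl Hs => [|w q] /=.
    by move=> _ Ezv; rewrite Ezv in Hyz; rewrite (asym Hyz) in Hvy.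
  move=> /andP [Hzw Hq] Hl Hs.
  have pw := arc_part Hzw. rewrite (eqP pz) in pw.
  have nwv : w != v by apply: contra pw => /eqP ->.
  have nwu : w != u by apply: contra pw => /eqP ->; rewrite huv.
  have nzv : z != v by apply/eqP => E; rewrite E in Hyz; rewrite (asym Hyz) in Hvy.
  case Hvw: (a v w).
    by apply: (IH q w) => //; rewrite -ltnS ltnW.
  have Hwv : a w v by apply: other Hvw.
  case Huw: (a u w).
    exists [:: w; v]; split => //. rewrite /dpath /= Huw Hwv /= !inE negb_or nuv.
    by rewrite (neq_of Huw) nwv.
  have Hwu : a w u by apply: other Huw; rewrite huv.
  have nyw : y != w by apply/eqP => E; rewrite E (asym Hwv) in Hvy.
  have nyz := neq_of Hyz. have nzw := neq_of Hzw.
  exfalso; apply: (Hnc [:: y; z; w; u]) => //; finish.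
- have nzv : z != v by apply/eqP => E; rewrite E eqxx in pz.
  have nzu : z != u by apply/eqP => E; rewrite E huv eqxx in pz.
  case Hvz: (a v z).
    by apply: (IH q z).
  have Hzv : a z v by apply: other Hvz; rewrite eq_sym.
  case Huz: (a u z).
    exists [:: z; v]; split => //. rewrite /dpath /= Huz Hzv /= !inE negb_or nuv.
    by rewrite eq_sym nzu nzv.
  have Hzu : a z u by apply: other Huz; rewrite huv eq_sym.
  have nyz := neq_of Hyz.
  exfalso; apply: (Hnc [:: y; z; u]) => //; finish.
Qed.
End S.

Theorem lemma24 (r : nat) (V W : finType) (a : rel V) (h : rel W)
  (rho : V -> V -> W) (part : V -> 'I_r) (k : nat) (u v : V) :
  2 <= r ->
  multipartite_tournament a part ->
  5 <= k ->
  closure_arc a h rho (k - 1) u v ->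
  ~ closure_arc a h rho (k - 1) v u ->
  dist_le a u v 2.
Proof.
move=> _ HT Hk [nuv [p [Hp Hl _]]] Hnc.
have Hnc' : forall q, dpath a v q -> last v q = u -> size q <= 4 -> False.
  move=> q Hq Hql Hs; apply: Hnc; split; first by rewrite eq_sym.
  exists q; split => //; rewrite /H_length.
  case: q Hq Hql Hs => [|x q] /=; first by move=> _ E; rewrite E eqxx in nuv.
  move=> _ _ Hs; apply: leq_trans (_ : (size q).+1 <= k - 1).
    by rewrite ltnS (nobs_le h rho v (x :: q)).
  by apply: leq_trans Hs _; rewrite leq_subRL ?(leq_trans _ Hk).
case: (boolP (part u == part v)) => pu; last first.
  case Huv: (a u v).
    exists [:: v]; split => //; by rewrite /dpath /= Huv /= inE nuv.
  have Hvu : a v u by apply: (other HT _ _ _ Huv).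
  exfalso; apply: (Hnc' [:: u]) => //; rewrite /dpath /= Hvu /= inE eq_sym nuv.
  done.
case: p Hp Hl => [|x p] /=; first by move=> _ E; rewrite E eqxx in nuv.
rewrite /dpath /= => /andP [/andP [Hux Hp] _] Hl.
have px := arc_part HT _ _ Hux. rewrite (eqP pu) in px.
case Hvx: (a v x).
  exact: (inv HT (eqP pu) nuv Hnc' (size p) p x).
have Hxv : a x v by apply: (other HT _ _ _ Hvx).
exists [:: x; v]; split => //. rewrite /dpath /= Hux Hxv /= !inE negb_or nuv.
by rewrite (neq_of HT _ _ Hux) (neq_of HT _ _ Hxv).
Qed.
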